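(* Let $X,Y\in\mathbb{R}^{n\times n}$ and define $L:\mathbb{R}^{n\times n}\to\mathbb{R}^{n\times n}$ by $L(A)=XAY$. Then $L$ maps the set of minimally semipositive $n\times n$ matrices onto itself (i.e. $L(S)=S$ where $S$ is this set) if and only if either both $X$ and $Y$ are monomial, or both $-X$ and $-Y$ are monomial.
   Context: For a matrix or vector, $\geq 0$ means entrywise nonnegative and $>0$ entrywise positive. A matrix $A\in\mathbb{R}^{m\times n}$ is semipositive if there exists $x\in\mathbb{R}^n$ with $x\geq 0$ and $Ax>0$. $A$ is minimally semipositive if it is semipositive and no submatrix obtained from $A$ by deleting one or more columns is semipositive. A square matrix $A$ is monomial if $A\geq 0$ and every row and every column of $A$ contains exactly one nonzero entry. *)

(* Defs.v *)
(* Real numbers are modelled by an arbitrary real field R. *)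
From HB Require Import structures.
From mathcomp Require Import all_boot all_order all_algebra all_fingroup.
Set Implicit Arguments. Unset Strict Implicit. Unset Printing Implicit Defensive.
Import Order.TTheory GRing.Theory Num.Theory.
Local Open Scope ring_scope.

Definition semipositive (R : realFieldType) (m n : nat) (A : 'M[R]_(m, n)) : Prop :=
  exists x : 'cV[R]_n, (forall j, 0 <= x j 0) /\ (forall i, 0 < (A *m x) i 0).

Definition col_submx (R : realFieldType) (m n : nat) (A : 'M[R]_(m, n))
  (J : {set 'I_n}) : 'M[R]_(m, #|J|) :=
  colsub (@enum_val _ (mem J)) A.

Definition min_semipositive (R : realFieldType) (m n : nat) (A : 'M[R]_(m, n)) : Prop :=
  semipositive A /\
  forall J : {set 'I_n}, J != setT -> ~ semipositive (col_submx A J).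

Definition monomial (R : realFieldType) (n : nat) (A : 'M[R]_n) : Prop :=
  (forall i j, 0 <= A i j) /\
  (forall i, #|[set j | A i j != 0]| = 1%N) /\
  (forall j, #|[set i | A i j != 0]| = 1%N).

(* Main.v *)
Require Import Defs.
From HB Require Import structures.
From mathcomp Require Import all_boot all_order all_algebra all_fingroup.
From mathcomp Require Import ring.
Import Order.TTheory GRing.Theory Num.Theory.
Local Open Scope ring_scope.
Set Implicit Arguments. Unset Strict Implicit.

Section MSP.
Variable R : realFieldType.

Definition inv_nonneg n (A : 'M[R]_n) : Prop :=
  exists B : 'M[R]_n, A *m B = 1%:M /\ B *m A = 1%:M /\ forall i j, 0 <= B i j.

Lemma inv_nonneg_msp n (A : 'M[R]_n) : inv_nonneg A -> min_semipositive A.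
Proof.
case=> B [AB [BA B0]]; split.
  exists (B *m const_mx 1); split.
    by move=> j; rewrite mxE sumr_ge0 // => k _; rewrite ?mxE ?mulr1.
  by move=> i; rewrite mulmxA AB mul1mx mxE.
move=> J JT [y [y0 Ay]].
have [j jJ]: exists j, j \notin J.
  apply/existsP; move: JT; apply: contraR; rewrite negb_exists => /forallP H.
  by apply/eqP/setP => j; rewrite inE; move: (H j); rewrite negbK.
pose S : 'M[R]_(n, #|J|) := \matrix_(j, k) (j == enum_val k)%:R.
pose x := S *m y.
have ASy : A *m x = col_submx A J *m y.
  rewrite /x mulmxA; congr (_ *m _); apply/matrixP => i k.
  rewrite !mxE /S (bigD1 (enum_val k)) //= big1 ?addr0.
    by rewrite mxE eqxx mulr1.
  by move=> l /negbTE hl; rewrite mxE hl mulr0.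
have x0 : x j 0 = 0.
  rewrite mxE big1 // => k _; rewrite mxE.
  case: eqP => [e|]; last by rewrite mul0r.
  by move: jJ; rewrite e; have := enum_valP k => /= ->.
have xB : x = B *m (A *m x) by rewrite mulmxA BA mul1mx.
have H : forall k, B j k * (A *m x) k 0 = 0.
  move=> k; apply: (@psumr_eq0P _ _ predT (fun k => B j k * (A *m x) k 0)) => //.
    by move=> l _; rewrite mulr_ge0 // ASy ltW.
  by rewrite -[RHS]x0 [in RHS]xB mxE.
have Bj0 : forall k, B j k = 0.
  move=> k; have := H k; move/eqP; rewrite mulf_eq0 => /orP [/eqP //|].
  by rewrite ASy => /eqP h; have := Ay k; rewrite h ltxx.
have := congr1 (fun M : 'M[R]_n => M j j) BA; rewrite !mxE eqxx /= big1.
  by move=> /esym/eqP; rewrite oner_eq0.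
by move=> k _; rewrite Bj0 mul0r.
Qed.

Lemma msp_pos n (A : 'M[R]_n) : min_semipositive A ->
  forall w : 'cV[R]_n, (forall j, 0 <= w j 0) -> (forall i, 0 < (A *m w) i 0) ->
  forall j, 0 < w j 0.
Proof.
case=> _ Hmin w w0 Aw j; rewrite lt_def w0 andbT; apply/negP => /eqP wj.
pose J := [set j | w j 0 != 0].
apply: (Hmin J).
  apply/negP => /eqP JT; have : j \in J by rewrite JT inE.
  by rewrite inE wj eqxx.
exists (\col_k w (enum_val k) 0); split; first by move=> k; rewrite mxE.
move=> i; suff -> : (col_submx A J *m \col_k w (enum_val k) 0) i 0 = (A *m w) i 0 by [].
rewrite !mxE.
transitivity (\sum_(k < #|J|) A i (enum_val k) * w (enum_val k) 0).
  by apply: eq_bigr => k _; rewrite !mxE.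
rewrite -(big_enum_val (fun l => A i l * w l 0)) /= big_mkcond /=.
apply: eq_bigr => l _; rewrite inE; case: eqP => // ->; by rewrite mulr0.
Qed.

Lemma msp_mono n (A : 'M[R]_n) : min_semipositive A ->
  forall v : 'cV[R]_n, (forall i, 0 <= (A *m v) i 0) -> forall j, 0 <= v j 0.
Proof.
move=> Hm v Av j1; rewrite leNgt; apply/negP => vj1.
have Hpos := msp_pos Hm.
case: (Hm) => [[x [x0 Ax]] _].
have xp : forall j, 0 < x j 0 by apply: Hpos.
pose F := fun j : 'I_n => x j 0 / (- v j 0).
pose P := fun j : 'I_n => v j 0 < 0.
have : P j1 by [].
move=> Pj1; case: (@arg_minP _ _ _ j1 P F Pj1) => js Pjs Fmin.
set t := F js.
have tp : 0 < t by rewrite /t /F divr_gt0 ?oppr_gt0.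
pose w := x + t *: v.
have w0 : forall j, 0 <= w j 0.
  move=> j; rewrite !mxE; case: (ltP (v j 0) 0) => vj.
    have := Fmin j vj; rewrite -/t /F ler_pdivlMr ?oppr_gt0 //.
    by rewrite mulrN -subr_ge0 opprK addrC.
  by apply: addr_ge0; [exact: ltW | apply: mulr_ge0 => //; exact: ltW].
have Aw : forall i, 0 < (A *m w) i 0.
  move=> i; rewrite mulmxDr -scalemxAr !mxE.
  apply: ltr_wpDr; first by apply: mulr_ge0; [exact: ltW | have := Av i; rewrite mxE].
  by have := Ax i; rewrite mxE.
have := Hpos w w0 Aw js; rewrite !mxE /t /F.
by rewrite invrN mulrN mulNr -mulrA mulVf ?mulr1 ?subrr ?ltxx // lt_eqF.
Qed.

Lemma msp_inv_nonneg n (A : 'M[R]_n) : min_semipositive A -> inv_nonneg A.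
Proof.
move=> Hm; have Hmo := msp_mono Hm.
have Au : A \in unitmx.
  rewrite -unitmx_tr -row_free_unit -kermx_eq0; apply/eqP/matrixP => i j.
  pose z := (row i (kermx A^T))^T.
  have Az : A *m z = 0.
    by rewrite /z -[A]trmxK -trmx_mul trmxK -row_mul mulmx_ker row0 trmx0.
  have h1 := Hmo z; have h2 := Hmo (- z).
  have : 0 <= z j 0 by apply: h1 => i'; rewrite Az mxE.
  have : 0 <= (- z) j 0 by apply: h2 => i'; rewrite mulmxN Az oppr0 mxE.
  rewrite !mxE oppr_ge0 => a b; apply/eqP; rewrite eq_le a b.
  by [].
exists (invmx A); split; first exact: mulmxV.
split; first exact: mulVmx.
move=> i k.
suff H : forall i', 0 <= (A *m col k (invmx A)) i' 0.
  by have := Hmo (col k (invmx A)) H i; rewrite mxE.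
move=> i'; rewrite colEsub mulmx_colsub mulmxV // !mxE; exact: ler0n.
Qed.

Lemma msp_iff n (A : 'M[R]_n) : min_semipositive A <-> inv_nonneg A.
Proof. split; [exact: msp_inv_nonneg | exact: inv_nonneg_msp]. Qed.
End MSP.
Section Mono.
Variable R : realFieldType.

Lemma row_one n (M N : 'M[R]_n) : (forall i j, 0 <= M i j) -> (forall i j, 0 <= N i j) ->
  M *m N = 1%:M -> N *m M = 1%:M -> forall i, #|[set j | M i j != 0]| = 1%N.
Proof.
move=> M0 N0 MN NM i.
case: (pickP (fun j => M i j != 0)) => [j0 Mj0 | H0]; last first.
  have := congr1 (fun A : 'M[R]_n => A i i) MN; rewrite !mxE eqxx /= big1.
    by move=> /esym/eqP; rewrite oner_eq0.
  by move=> l _; have := H0 l => /= /negbFE/eqP ->; rewrite mul0r.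
have Nz : forall l k, M i l != 0 -> k != i -> N l k = 0.
  move=> l k Ml ki.
  have h : \sum_l' M i l' * N l' k = 0.
    by have := congr1 (fun A : 'M[R]_n => A i k) MN; rewrite !mxE eq_sym (negbTE ki) /=.
  have := (@psumr_eq0P _ _ predT (fun l' => M i l' * N l' k)) (fun l' _ => mulr_ge0 (M0 _ _) (N0 _ _)) h l isT.
  by move/eqP; rewrite mulf_eq0 (negbTE Ml) /= => /eqP.
have NMe : forall l l', M i l != 0 -> (N *m M) l l' = N l i * M i l'.
  move=> l l' Ml; rewrite mxE (bigD1 i) //= big1 ?addr0 // => k ki.
  by rewrite Nz ?mul0r.
apply: (@eq_card1 _ j0) => j; rewrite inE /=.
case: (eqVneq j j0) => [->|jj0]; first by rewrite inE eqxx Mj0.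
rewrite inE (negbTE jj0); case: eqP => // /eqP Mj; exfalso.
have h1 := NMe j0 j0 Mj0; rewrite NM mxE eqxx /= in h1.
have h2 := NMe j0 j Mj0; rewrite NM mxE eq_sym (negbTE jj0) /= in h2.
have : N j0 i != 0 by apply/negP => /eqP e; move: h1; rewrite e mul0r => /eqP; rewrite oner_eq0.
by move=> Nj; move: h2 => /esym/eqP; rewrite mulf_eq0 (negbTE Nj) (negbTE Mj).
Qed.

Lemma monomial_of_inv n (M N : 'M[R]_n) : (forall i j, 0 <= M i j) -> (forall i j, 0 <= N i j) ->
  M *m N = 1%:M -> monomial M.
Proof.
move=> M0 N0 MN; have NM := mulmx1C MN.
split=> //; split; first exact: (row_one M0 N0 MN NM).
move=> j.
have := (@row_one n M^T N^T) _ _ _ _ j.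
have -> : [set j0 | M^T j j0 != 0] = [set i | M i j != 0] by apply/setP => i; rewrite !inE mxE.
apply.
- by move=> a b; rewrite mxE.
- by move=> a b; rewrite mxE.
- by rewrite -trmx_mul NM trmx1.
- by rewrite -trmx_mul MN trmx1.
Qed.

Lemma monomial_inv n (M : 'M[R]_n) : monomial M ->
  exists Z : 'M[R]_n, M *m Z = 1%:M /\ Z *m M = 1%:M /\ forall i j, 0 <= Z i j.
Proof.
case=> M0 [Hr Hc].
pose Z := \matrix_(j, k) (if M k j != 0 then (M k j)^-1 else 0).
have MZ : M *m Z = 1%:M.
  apply/matrixP => i k; rewrite !mxE.
  have /cards1P [j0 e] := introT eqP (Hr i).
  have ej : forall j, (M i j != 0) = (j == j0).
    by move=> j; have := congr1 (fun S : {set 'I_n} => j \in S) e; rewrite !inE.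
  rewrite (bigD1 j0) //= big1 ?addr0; last first.
    by move=> j jj; have := ej j; rewrite (negbTE jj) => /negbFE/eqP ->; rewrite mul0r.
  have Mij0 : M i j0 != 0 by rewrite ej.
  rewrite mxE; case: (eqVneq i k) => [<-|ik].
    by rewrite Mij0 divff.
  case: ifP => Mk; last by rewrite mulr0.
  have /cards1P [i0 e2] := introT eqP (Hc j0).
  have ei : forall i', (M i' j0 != 0) = (i' == i0).
    by move=> i'; have := congr1 (fun S : {set 'I_n} => i' \in S) e2; rewrite !inE.
  move: Mij0 Mk; rewrite !ei => /eqP e1 /eqP e3.
  by move: ik; rewrite e1 e3 eqxx.
exists Z; split=> //; split; first exact: mulmx1C.
by move=> a b; rewrite mxE; case: ifP => // _; rewrite invr_ge0.
Qed.
End Mono.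
Section Main.
Variable R : realFieldType.

Lemma nonneg_mul m n p (A : 'M[R]_(m, n)) (B : 'M[R]_(n, p)) :
  (forall i j, 0 <= A i j) -> (forall i j, 0 <= B i j) -> forall i j, 0 <= (A *m B) i j.
Proof. by move=> A0 B0 i j; rewrite mxE sumr_ge0 // => k _; rewrite mulr_ge0. Qed.

Lemma inv_unique n (M C C' : 'M[R]_n) : M *m C' = 1%:M -> C *m M = 1%:M -> C = C'.
Proof. by move=> h1 h2; rewrite -[C]mulmx1 -h1 mulmxA h2 mul1mx. Qed.

Lemma suff_dir n (X Y : 'M[R]_n) : monomial X -> monomial Y ->
  ((forall A : 'M[R]_n, min_semipositive A -> min_semipositive (X *m A *m Y)) /\
   (forall B : 'M[R]_n, min_semipositive B ->
      exists A : 'M[R]_n, min_semipositive A /\ B = X *m A *m Y)).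
Proof.
move=> mX mY; case: (mX) => X0 _; case: (mY) => Y0 _.
move: mX mY => /monomial_inv [Xi [XXi [XiX Xi0]]] /monomial_inv [Yi [YYi [YiY Yi0]]].
split.
  move=> A /msp_iff [B [AB [BA B0]]]; apply/msp_iff.
  exists (Yi *m B *m Xi); split.
    by rewrite -!mulmxA (mulmxA Y) YYi mul1mx (mulmxA A) AB mul1mx XXi.
  split.
    by rewrite -!mulmxA (mulmxA Xi) XiX mul1mx (mulmxA B) BA mul1mx YiY.
  by apply: nonneg_mul => //; apply: nonneg_mul.
move=> B /msp_iff [C [BC [CB C0]]].
exists (Xi *m B *m Yi); split; last first.
  by rewrite !mulmxA XXi mul1mx -mulmxA YiY mulmx1.
apply/msp_iff; exists (Y *m C *m X); split.
  by rewrite -!mulmxA (mulmxA Yi) YiY mul1mx (mulmxA B) BC mul1mx XiX.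
split.
  by rewrite -!mulmxA (mulmxA X) XXi mul1mx (mulmxA C) CB mul1mx YYi.
by apply: nonneg_mul => //; apply: nonneg_mul.
Qed.

Lemma delta_entry n (A B : 'M[R]_n) j k a b :
  (A *m delta_mx j k *m B) a b = A a j * B k b.
Proof.
rewrite mxE (bigD1 k) //= big1 ?addr0; last first.
  move=> l lk; rewrite mxE (bigD1 j) //= big1 ?addr0.
    by rewrite mxE eqxx /= (negbTE lk) /= mulr0 mul0r.
  by move=> m mj; rewrite mxE (negbTE mj) /= mulr0.
rewrite mxE (bigD1 j) //= big1 ?addr0.
  by rewrite mxE !eqxx /= mulr1.
by move=> m mj; rewrite mxE (negbTE mj) /= mulr0.
Qed.

Lemma lin_nonneg (c d : R) : (forall t, 0 <= t -> 0 <= c + t * d) -> 0 <= d.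
Proof.
move=> H; rewrite leNgt; apply/negP => d0.
have t0 : 0 <= (`|c| + 1) / (- d) by rewrite divr_ge0 // ?addr_ge0 // oppr_ge0 ltW.
have := H _ t0; rewrite -mulrA mulrC invrN mulNr mulVf ?lt_eqF // mulN1r.
rewrite opprD addrA subr_ge0 => h.
have h2 : c - `|c| <= 0 by rewrite subr_le0 ler_norm.
by have := le_trans h h2; rewrite ler10.
Qed.

Lemma pair_exists n (j k : 'I_n) (t : R) : 0 <= t ->
  exists Aa : 'M[R]_n, Aa *m (1%:M + t *: delta_mx j k) = 1%:M.
Proof.
move=> t0.
pose r : R := (k == j)%:R.
have b0 : 0 < 1 + t * r by rewrite ltr_wpDr // mulr_ge0 // ler0n.
exists (1%:M - (t / (1 + t * r)) *: delta_mx j k).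
rewrite mulmxDr mulmx1 mulmxBl mul1mx -scalemxAl -scalemxAr mul_delta_mx_cond.
rewrite -scaler_nat scalerA -/r.
apply/matrixP => a b; rewrite !mxE.
set e := _ %:R.
have bn : 1 + t * r != 0 by rewrite gt_eqF.
by field.
Qed.

Lemma sign_split n (U V : 'M[R]_n) i0 j0 k0 l0 : U i0 j0 != 0 -> V k0 l0 != 0 ->
  (forall a j k b, 0 <= U a j * V k b) ->
  ((forall a b, 0 <= U a b) /\ (forall a b, 0 <= V a b)) \/
  ((forall a b, U a b <= 0) /\ (forall a b, V a b <= 0)).
Proof.
move=> U0 V0 H.
case: (ltgtP (U i0 j0) 0) => [Un|Up|Ue]; last by move: U0; rewrite Ue eqxx.
  have Vn : forall a b, V a b <= 0 by move=> a b; rewrite -(nmulr_rge0 _ Un) H.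
  have Vn0 : V k0 l0 < 0 by rewrite lt_def eq_sym V0 Vn.
  right; split => // a b; by rewrite -(nmulr_lge0 _ Vn0) H.
have Vp : forall a b, 0 <= V a b by move=> a b; rewrite -(pmulr_rge0 _ Up) H.
have Vp0 : 0 < V k0 l0 by rewrite lt_def V0 Vp.
left; split => // a b; by rewrite -(pmulr_lge0 _ Vp0) H.
Qed.

Lemma nonzero_entry n (M N : 'M[R]_n.+1) : M *m N = 1%:M -> exists i j, M i j != 0.
Proof.
move=> MN; case: (pickP (fun p : 'I_n.+1 * 'I_n.+1 => M p.1 p.2 != 0)) => [[i j] h|h].
  by exists i, j.
have := congr1 (fun A : 'M[R]_n.+1 => A ord0 ord0) MN; rewrite !mxE eqxx /= big1.
  by move=> /esym/eqP; rewrite oner_eq0.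
by move=> l _; have := h (ord0, l) => /= /negbFE/eqP ->; rewrite mul0r.
Qed.

Lemma no_flip n (M N : 'M[R]_n.+1) : (forall a b, 0 <= M a b) -> (forall a b, N a b <= 0) ->
  M *m N = 1%:M -> False.
Proof.
move=> M0 N0 MN.
have := congr1 (fun A : 'M[R]_n.+1 => A ord0 ord0) MN; rewrite !mxE eqxx /=.
have : \sum_l M ord0 l * N l ord0 <= 0.
  rewrite -oppr_ge0 -sumrN sumr_ge0 // => l _; rewrite -mulrN mulr_ge0 // oppr_ge0 //.
by move=> h e; move: h; rewrite e ler10.
Qed.

End Main.

Unset Implicit Arguments.
Theorem mainTheorem7 (R : realFieldType) (n : nat) (X Y : 'M[R]_n) :
  ((forall A : 'M[R]_n, min_semipositive A -> min_semipositive (X *m A *m Y)) /\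
   (forall B : 'M[R]_n, min_semipositive B ->
      exists A : 'M[R]_n, min_semipositive A /\ B = X *m A *m Y))
  <->
  ((monomial X /\ monomial Y) \/ (monomial (- X) /\ monomial (- Y))).
Proof.
split; last first.
  case=> [[mX mY]|[mX mY]]; first exact: suff_dir.
  have E : forall A : 'M[R]_n, (- X) *m A *m (- Y) = X *m A *m Y.
    by move=> A; rewrite !(mulNmx, mulmxN) opprK.
  case: (suff_dir mX mY) => h1 h2; split => [A|B].
    by rewrite -E; exact: h1.
  by move/h2 => [A [? e]]; exists A; rewrite -E.
case; case: n X Y => [|n] X Y H1 H2.
  by left; split; (split; [case|split; case]).
have I0 : forall a b : 'I_n.+1, 0 <= (1%:M : 'M[R]_n.+1) a b by move=> a b; rewrite mxE ler0n.
have [W [XYW [WXY W0]]] : inv_nonneg (X *m 1%:M *m Y).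
  by apply/msp_iff/H1/msp_iff; exists 1%:M; rewrite mulmx1.
rewrite mulmx1 in XYW WXY.
have [Xi XXi] : exists Xi, X *m Xi = 1%:M by exists (Y *m W); rewrite mulmxA.
have XiX := mulmx1C XXi.
have [Yi YiY] : exists Yi, Yi *m Y = 1%:M by exists (W *m X); rewrite -mulmxA.
have YYi := mulmx1C YiY.
have split_entry : forall (P Q : 'M[R]_n.+1) j k t a b,
    (P *m (1%:M + t *: delta_mx j k) *m Q) a b = (P *m Q) a b + t * (P *m delta_mx j k *m Q) a b.
  move=> P Q j k t a b.
  have -> : P *m (1%:M + t *: delta_mx j k) *m Q = P *m Q + t *: (P *m delta_mx j k *m Q).
    by rewrite mulmxDr mulmx1 mulmxDl -scalemxAr -scalemxAl.
  by rewrite [in LHS]mxE; congr (_ + _); rewrite [in LHS]mxE.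
have Bb0 : forall (j k : 'I_n.+1) (t : R), 0 <= t -> forall a b, 0 <= (1%:M + t *: delta_mx j k) a b.
  by move=> j k t t0 a b; rewrite !mxE addr_ge0 ?ler0n // mulr_ge0 // ler0n.
have K1 : forall a j k b, 0 <= Yi a j * Xi k b.
  move=> a j k b; rewrite -delta_entry; apply: (@lin_nonneg _ ((Yi *m Xi) a b)) => t t0.
  have [Aa AaB] := pair_exists j k t0.
  have BaA := mulmx1C AaB.
  have : min_semipositive (X *m Aa *m Y).
    by apply: H1; apply/msp_iff; exists (1%:M + t *: delta_mx j k); split => //; split => //; exact: Bb0.
  move/msp_iff => [C [MC [CM C0]]].
  have CE : C = Yi *m (1%:M + t *: delta_mx j k) *m Xi.
    apply: (inv_unique _ CM).
    by rewrite -!mulmxA (mulmxA Y) YYi mul1mx (mulmxA Aa) AaB mul1mx XXi.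
  by have := C0 a b; rewrite CE split_entry.
have K2 : forall a j k b, 0 <= Y a j * X k b.
  move=> a j k b; rewrite -delta_entry; apply: (@lin_nonneg _ ((Y *m X) a b)) => t t0.
  have [Aa AaB] := pair_exists j k t0.
  have BaA := mulmx1C AaB.
  have : min_semipositive Aa.
    by apply/msp_iff; exists (1%:M + t *: delta_mx j k); split => //; split => //; exact: Bb0.
  move/H2 => [A' [MA' eA]].
  have eA' : A' = Xi *m Aa *m Yi.
    by rewrite eA !mulmxA XiX mul1mx -mulmxA YYi mulmx1.
  move/msp_iff: MA' => [C [MC [CM C0]]].
  have CE : C = Y *m (1%:M + t *: delta_mx j k) *m X.
    apply: (inv_unique _ CM); rewrite eA'.
    by rewrite -!mulmxA (mulmxA Yi) YiY mul1mx (mulmxA Aa) AaB mul1mx XiX.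
  by have := C0 a b; rewrite CE split_entry.
have [x1 [x2 Xn]] := nonzero_entry XXi.
have [y1 [y2 Yn]] := nonzero_entry YYi.
have [x3 [x4 Xin]] := nonzero_entry XiX.
have [y3 [y4 Yin]] := nonzero_entry YiY.
have NN : (- X) *m (- Xi) = 1%:M by rewrite !(mulNmx, mulmxN) opprK.
have NNY : (- Y) *m (- Yi) = 1%:M by rewrite !(mulNmx, mulmxN) opprK.
case: (sign_split Yn Xn K2) => [[Y0 X0]|[Y0 X0]];
  case: (sign_split Yin Xin K1) => [[Yi0 Xi0]|[Yi0 Xi0]].
- by left; split; [exact: (monomial_of_inv X0 Xi0 XXi)|exact: (monomial_of_inv Y0 Yi0 YYi)].
- by exfalso; exact: (no_flip X0 Xi0 XXi).
- exfalso; apply: (no_flip _ _ NN) => a b; rewrite mxE ?oppr_ge0 ?oppr_le0 //.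
- right; split; [apply: (monomial_of_inv _ _ NN)|apply: (monomial_of_inv _ _ NNY)];
    by move=> a b; rewrite mxE oppr_ge0.
Qed.
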